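(* If a non-failed Boolean CSP is closed under the applications of (each of) the rules of the proof system BOOL', then it is hyper-arc consistent.
   Context: A Boolean CSP is $\langle \mathcal C; x_1\in D_1,\dots,x_n\in D_n\rangle$ with $D_i\subseteq\{0,1\}$ and $\mathcal C$ a finite set of Boolean constraints, each of the forms $u=v$ ($\{(0,0),(1,1)\}$), $\neg u=v$ ($\{(0,1),(1,0)\}$), $u\wedge v=w$ ($\{(0,0,0),(0,1,0),(1,0,0),(1,1,1)\}$), $u\vee v=w$ ($\{(0,0,0),(0,1,1),(1,0,1),(1,1,1)\}$) on distinct variables; constraints are always understood as restricted to the current domains. $x=d$ means $x\in\{d\}$. A CSP is failed if some domain is empty. A constraint is solved if it equals the product of the domains of its variables; $\phi$ is a reformulation of $\psi$ if removing solved constraints from both yields the same CSP. The proof system BOOL' consists of the rules (constraint, premise $\rightarrow$ conclusion; $x,y,z$ schematic): EQU1: $x=y$, $x=1\rightarrow y=1$; EQU2: $x=y$, $y=1\rightarrow x=1$; EQU3: $x=y$, $x=0\rightarrow y=0$; EQU4: $x=y$, $y=0\rightarrow x=0$; NOT1: $\neg x=y$, $x=1\rightarrow y=0$; NOT2: $\neg x=y$, $x=0\rightarrow y=1$; NOT3: $\neg x=y$, $y=1\rightarrow x=0$; NOT4: $\neg x=y$, $y=0\rightarrow x=1$; AND1': $x\wedge y=z$, $x=1\rightarrow$ constraint $y=z$; AND2': $x\wedge y=z$, $y=1\rightarrow$ constraint $x=z$; AND3': $x\wedge y=z$, $z=1\rightarrow x=1$; AND4: $x\wedge y=z$, $x=0\rightarrow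 z=0$; AND5: $x\wedge y=z$, $y=0\rightarrow z=0$; AND6': $x\wedge y=z$, $z=1\rightarrow y=1$; OR1: $x\vee y=z$, $x=1\rightarrow z=1$; OR2': $x\vee y=z$, $x=0\rightarrow$ constraint $y=z$; OR3': $x\vee y=z$, $y=0\rightarrow$ constraint $x=z$; OR4': $x\vee y=z$, $z=0\rightarrow x=0$; OR5: $x\vee y=z$, $y=1\rightarrow z=1$; OR6': $x\vee y=z$, $z=0\rightarrow y=0$. On CSPs: a rule with constraint $c$ and premise $X=s$ is applicable to a CSP containing (an instance of) $c$ in which each variable of $X$ has domain exactly $\{s_i\}$. If the conclusion is $Y=t$, the result removes $c$ and replaces the domain $D$ of each $y_j\in Y$ by $D\cap\{t_j\}$; if the conclusion is a constraint, the result replaces $c$ by that equality constraint (on the corresponding variables) and leaves domains unchanged. An application is relevant if its result is not a reformulation of the original CSP. A CSP is closed under the applications of a rule $R$ if $R$ cannot be applied or no application of it is relevant. A constraint is hyper-arc consistent if for every variable of it each value in its domain participates in a solution to the constraint (restricted to current domains); a CSP is hyper-arc consistent if every constraint of it is. *)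

(* Defs.v *)
From HB Require Import structures.
From mathcomp Require Import all_boot.
Set Implicit Arguments. Unset Strict Implicit. Unset Printing Implicit Defensive.

Section BoolCSP.
Variable n : nat.
Notation var := 'I_n.

(* The four constraint forms:
   CEq u v    :  u = v
   CNot u v   :  ~ u = v
   CAnd u v w :  u /\ v = w
   COr u v w  :  u \/ v = w *)
Inductive cons :=
| CEq of var & var
| CNot of var & var
| CAnd of var & var & var
| COr of var & var & var.

Definition cons_eq_dec : comparable cons.
Proof. move=> a b; rewrite /decidable; decide equality; exact: eq_comparable. Defined.
HB.instance Definition _ := hasDecEq.Build cons (compareP cons_eq_dec).

Definition scope (c : cons) : seq var :=
  match c with
  | CEq u v | CNot u v => [:: u; v]
  | CAnd u v w | COr u v w => [:: u; v; w]
  end.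

Definition rel (c : cons) : seq (seq bool) :=
  match c with
  | CEq _ _ => [:: [:: false; false]; [:: true; true]]
  | CNot _ _ => [:: [:: false; true]; [:: true; false]]
  | CAnd _ _ _ => [:: [:: false; false; false]; [:: false; true; false];
                      [:: true; false; false]; [:: true; true; true]]
  | COr _ _ _ => [:: [:: false; false; false]; [:: false; true; true];
                     [:: true; false; true]; [:: true; true; true]]
  end.

(* A Boolean CSP: a finite set of constraints (a list, read as a set) and domains *)
Record csp := CSP { cstrs : seq cons; doms : var -> {set bool} }.

Definition wf_csp (P : csp) : Prop := forall c, c \in cstrs P -> uniq (scope c).

Definition failed (P : csp) : Prop := exists x, doms P x = set0.

Definition in_doms (D : var -> {set bool}) (s : seq var) (t : seq bool) : bool :=
  all2 (fun x b => b \in D x) s t.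

(* solved: the restricted relation equals the product of the domains,
   i.e. every tuple of the product belongs to the relation *)
Definition solved (D : var -> {set bool}) (c : cons) : Prop :=
  forall t, in_doms D (scope c) t -> t \in rel c.

(* phi is a reformulation of psi: after removing solved constraints from both,
   they are the same CSP (same domains and same set of constraints) *)
Definition reformulation (phi psi : csp) : Prop :=
  (forall x, doms phi x = doms psi x) /\
  (forall c, (c \in cstrs phi /\ ~ solved (doms phi) c) <->
             (c \in cstrs psi /\ ~ solved (doms psi) c)).

Definition hac_cons (D : var -> {set bool}) (c : cons) : Prop :=
  forall x d, x \in scope c -> d \in D x ->
    exists2 t, t \in rel c & in_doms D (scope c) t && (nth false t (index x (scope c)) == d).

Definition hyper_arc_consistent (P : csp) : Prop :=
  forall c, c \in cstrs P -> hac_cons (doms P) c.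

Inductive rule :=
| EQU1 | EQU2 | EQU3 | EQU4
| NOT1 | NOT2 | NOT3 | NOT4
| AND1' | AND2' | AND3' | AND4 | AND5 | AND6'
| OR1 | OR2' | OR3' | OR4' | OR5 | OR6'.

(* conclusion: either a list of variable assignments Y = t, or a new constraint *)
Inductive concl := CDom of seq (var * bool) | CCons of cons.

Definition rule_inst (r : rule) (c : cons) : option (seq (var * bool) * concl) :=
  match r, c with
  | EQU1, CEq x y => Some ([:: (x, true)], CDom [:: (y, true)])
  | EQU2, CEq x y => Some ([:: (y, true)], CDom [:: (x, true)])
  | EQU3, CEq x y => Some ([:: (x, false)], CDom [:: (y, false)])
  | EQU4, CEq x y => Some ([:: (y, false)], CDom [:: (x, false)])
  | NOT1, CNot x y => Some ([:: (x, true)], CDom [:: (y, false)])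
  | NOT2, CNot x y => Some ([:: (x, false)], CDom [:: (y, true)])
  | NOT3, CNot x y => Some ([:: (y, true)], CDom [:: (x, false)])
  | NOT4, CNot x y => Some ([:: (y, false)], CDom [:: (x, true)])
  | AND1', CAnd x y z => Some ([:: (x, true)], CCons (CEq y z))
  | AND2', CAnd x y z => Some ([:: (y, true)], CCons (CEq x z))
  | AND3', CAnd x y z => Some ([:: (z, true)], CDom [:: (x, true)])
  | AND4, CAnd x y z => Some ([:: (x, false)], CDom [:: (z, false)])
  | AND5, CAnd x y z => Some ([:: (y, false)], CDom [:: (z, false)])
  | AND6', CAnd x y z => Some ([:: (z, true)], CDom [:: (y, true)])
  | OR1, COr x y z => Some ([:: (x, true)], CDom [:: (z, true)])
  | OR2', COr x y z => Some ([:: (x, false)], CCons (CEq y z))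
  | OR3', COr x y z => Some ([:: (y, false)], CCons (CEq x z))
  | OR4', COr x y z => Some ([:: (z, false)], CDom [:: (x, false)])
  | OR5, COr x y z => Some ([:: (y, true)], CDom [:: (z, true)])
  | OR6', COr x y z => Some ([:: (z, false)], CDom [:: (y, false)])
  | _, _ => None
  end.

Definition applicable (r : rule) (c : cons) (P : csp) : Prop :=
  c \in cstrs P /\
  exists prem cl, rule_inst r c = Some (prem, cl) /\
    all (fun p => doms P p.1 == [set p.2]) prem.

Definition restrict_doms (D : var -> {set bool}) (ys : seq (var * bool)) : var -> {set bool} :=
  foldr (fun p D' => fun y => if y == p.1 then D' y :&: [set p.2] else D' y) D ys.

Definition apply_concl (c : cons) (cl : concl) (P : csp) : csp :=
  match cl with
  | CDom ys => CSP [seq c' <- cstrs P | c' != c] (restrict_doms (doms P) ys)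
  | CCons c2 => CSP (c2 :: [seq c' <- cstrs P | c' != c]) (doms P)
  end.

Definition apply_rule (r : rule) (c : cons) (P : csp) : csp :=
  match rule_inst r c with
  | Some (_, cl) => apply_concl c cl P
  | None => P
  end.

Definition relevant_application (r : rule) (c : cons) (P : csp) : Prop :=
  ~ reformulation (apply_rule r c P) P.

Definition closed_under (r : rule) (P : csp) : Prop :=
  forall c, applicable r c P -> ~ relevant_application r c P.

End BoolCSP.

(* Main.v *)
Require Import Defs.
From mathcomp Require Import all_boot.
From Stdlib Require Import Classical.

Set Implicit Arguments. Unset Strict Implicit. Unset Printing Implicit Defensive.

Section Aux.
Variable n : nat.
Variable P : csp n.

Lemma closed_solved r c prem cl :
  c \in cstrs P -> closed_under r P -> rule_inst r c = Some (prem, cl) ->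
  all (fun p => doms P p.1 == [set p.2]) prem -> solved (doms P) c.
Proof.
move=> Hc Hcl Hri Hall; apply: NNPP => Hns.
apply: (Hcl c); first by split => //; exists prem, cl.
move=> [_ H2]; have [_ H] := H2 c.
have [Hin _] := H (conj Hc Hns).
move: Hin; rewrite /apply_rule Hri.
case: cl Hri => [ys|c2] Hri /=.
  by rewrite mem_filter eqxx.
have Hne : c2 != c.
  clear -Hri; move: Hri; case: r; case: c => //= *; match goal with H : Some _ = Some _ |- _ => case: H => _ <- end; apply/eqP; discriminate.
by rewrite in_cons mem_filter eqxx eq_sym (negbTE Hne).
Qed.

Lemma all2_map (s : seq 'I_n) (f : 'I_n -> bool) (D : 'I_n -> {set bool}) :
  in_doms D s (map f s) = all (fun x => f x \in D x) s.
Proof. by elim: s => //= a s ->. Qed.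

Lemma solved_hac c :
  ~ failed P -> solved (doms P) c -> hac_cons (doms P) c.
Proof.
move=> Hnf Hs x d Hx Hd.
pose f y := if y == x then d else true \in doms P y.
have Hin : in_doms (doms P) (scope c) (map f (scope c)).
  rewrite all2_map; apply/allP => y _; rewrite /f.
  case: eqP => [->//|_].
  case E: (true \in doms P y) => //.
  case E2: (false \in doms P y).
    done.
  exfalso; apply: Hnf; exists y; apply/setP => -[]; by rewrite in_set0 ?E ?E2.
exists (map f (scope c)); first exact: Hs.
rewrite Hin /= (nth_map x); last by rewrite index_mem.
by rewrite nth_index // /f eqxx.
Qed.

Lemma app_hac r c prem cl :
  ~ failed P -> c \in cstrs P -> closed_under r P -> rule_inst r c = Some (prem, cl) ->
  all (fun p => doms P p.1 == [set p.2]) prem -> hac_cons (doms P) c.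
Proof.
move=> Hnf Hc Hcl Hri Hall; apply: solved_hac => //.
exact: closed_solved Hri Hall.
Qed.

Lemma dom3 x : ~ failed P ->
  doms P x = [set false] \/ doms P x = [set true] \/ doms P x = setT.
Proof.
move=> Hnf.
case E: (true \in doms P x); case E2: (false \in doms P x).
- by right; right; apply/setP => -[]; rewrite in_setT ?E ?E2.
- by right; left; apply/setP => -[]; rewrite in_set1 ?E ?E2.
- by left; apply/setP => -[]; rewrite in_set1 ?E ?E2.
- by exfalso; apply: Hnf; exists x; apply/setP => -[]; rewrite in_set0 ?E ?E2.
Qed.

End Aux.

Section Direct.
Variable n : nat.
Variable D : 'I_n -> {set bool}.

Lemma hac_eq u v : D u = setT -> D v = setT -> hac_cons D (CEq u v).
Proof.
move=> Hu Hv; move=> x d Hx Hd;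
  move: (Hx); rewrite -index_mem => Hi;
  have Hn := nth_index x Hx;
  set i := index x _ in Hi Hn *; clearbody i; move: Hd; rewrite -Hn;
  case: i Hi {Hn} => [|[|[|i]]] //= _ Hd.
- by exists [:: d; d]; [case: (d) | rewrite /= Hu Hv !in_setT eqxx].
- by exists [:: d; d]; [case: (d) | rewrite /= Hu Hv !in_setT eqxx].
Qed.

Lemma hac_not u v : D u = setT -> D v = setT -> hac_cons D (CNot u v).
Proof.
move=> Hu Hv; move=> x d Hx Hd;
  move: (Hx); rewrite -index_mem => Hi;
  have Hn := nth_index x Hx;
  set i := index x _ in Hi Hn *; clearbody i; move: Hd; rewrite -Hn;
  case: i Hi {Hn} => [|[|[|i]]] //= _ Hd.
- by exists [:: d; ~~ d]; [case: (d) | rewrite /= Hu Hv !in_setT eqxx].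
- by exists [:: ~~ d; d]; [case: (d) | rewrite /= Hu Hv !in_setT eqxx].
Qed.

Lemma hac_and u v w : D u = setT -> D v = setT -> false \in D w ->
  hac_cons D (CAnd u v w).
Proof.
move=> Hu Hv Hw; move=> x d Hx Hd;
  move: (Hx); rewrite -index_mem => Hi;
  have Hn := nth_index x Hx;
  set i := index x _ in Hi Hn *; clearbody i; move: Hd; rewrite -Hn;
  case: i Hi {Hn} => [|[|[|i]]] //= _ Hd.
- by exists [:: d; false; false]; [case: (d) | rewrite /= Hu Hv Hw !in_setT eqxx].
- by exists [:: false; d; false]; [case: (d) | rewrite /= Hu Hv Hw !in_setT eqxx].
- by exists [:: d; d; d]; [case: (d) | rewrite /= Hu Hv Hd !in_setT eqxx].
Qed.

Lemma hac_or u v w : D u = setT -> D v = setT -> true \in D w ->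
  hac_cons D (COr u v w).
Proof.
move=> Hu Hv Hw; move=> x d Hx Hd;
  move: (Hx); rewrite -index_mem => Hi;
  have Hn := nth_index x Hx;
  set i := index x _ in Hi Hn *; clearbody i; move: Hd; rewrite -Hn;
  case: i Hi {Hn} => [|[|[|i]]] //= _ Hd.
- by exists [:: d; true; true]; [case: (d) | rewrite /= Hu Hv Hw !in_setT eqxx].
- by exists [:: true; d; true]; [case: (d) | rewrite /= Hu Hv Hw !in_setT eqxx].
- by exists [:: d; d; d]; [case: (d) | rewrite /= Hu Hv Hd !in_setT eqxx].
Qed.
End Direct.

Ltac rw_doms := repeat match goal with H : doms _ _ = _ |- _ => rewrite H end.

Ltac try_rules Hnf Hc Hcl :=
  first [ apply: (app_hac (r := EQU1)) Hnf Hc (Hcl _) _ _; [reflexivity| by rewrite /=; rw_doms; rewrite eqxx]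
        | apply: (app_hac (r := EQU2)) Hnf Hc (Hcl _) _ _; [reflexivity| by rewrite /=; rw_doms; rewrite eqxx]
        | apply: (app_hac (r := EQU3)) Hnf Hc (Hcl _) _ _; [reflexivity| by rewrite /=; rw_doms; rewrite eqxx]
        | apply: (app_hac (r := EQU4)) Hnf Hc (Hcl _) _ _; [reflexivity| by rewrite /=; rw_doms; rewrite eqxx]
        | apply: (app_hac (r := NOT1)) Hnf Hc (Hcl _) _ _; [reflexivity| by rewrite /=; rw_doms; rewrite eqxx]
        | apply: (app_hac (r := NOT2)) Hnf Hc (Hcl _) _ _; [reflexivity| by rewrite /=; rw_doms; rewrite eqxx]
        | apply: (app_hac (r := NOT3)) Hnf Hc (Hcl _) _ _; [reflexivity| by rewrite /=; rw_doms; rewrite eqxx]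
        | apply: (app_hac (r := NOT4)) Hnf Hc (Hcl _) _ _; [reflexivity| by rewrite /=; rw_doms; rewrite eqxx]
        | apply: (app_hac (r := AND1')) Hnf Hc (Hcl _) _ _; [reflexivity| by rewrite /=; rw_doms; rewrite eqxx]
        | apply: (app_hac (r := AND2')) Hnf Hc (Hcl _) _ _; [reflexivity| by rewrite /=; rw_doms; rewrite eqxx]
        | apply: (app_hac (r := AND3')) Hnf Hc (Hcl _) _ _; [reflexivity| by rewrite /=; rw_doms; rewrite eqxx]
        | apply: (app_hac (r := AND4)) Hnf Hc (Hcl _) _ _; [reflexivity| by rewrite /=; rw_doms; rewrite eqxx]
        | apply: (app_hac (r := AND5)) Hnf Hc (Hcl _) _ _; [reflexivity| by rewrite /=; rw_doms; rewrite eqxx]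
        | apply: (app_hac (r := OR1)) Hnf Hc (Hcl _) _ _; [reflexivity| by rewrite /=; rw_doms; rewrite eqxx]
        | apply: (app_hac (r := OR2')) Hnf Hc (Hcl _) _ _; [reflexivity| by rewrite /=; rw_doms; rewrite eqxx]
        | apply: (app_hac (r := OR3')) Hnf Hc (Hcl _) _ _; [reflexivity| by rewrite /=; rw_doms; rewrite eqxx]
        | apply: (app_hac (r := OR4')) Hnf Hc (Hcl _) _ _; [reflexivity| by rewrite /=; rw_doms; rewrite eqxx]
        | apply: (app_hac (r := OR5)) Hnf Hc (Hcl _) _ _; [reflexivity| by rewrite /=; rw_doms; rewrite eqxx]
        | apply: (app_hac (r := OR6')) Hnf Hc (Hcl _) _ _; [reflexivity| by rewrite /=; rw_doms; rewrite eqxx] ].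

Theorem theorem5 (n : nat) (P : csp n) :
  wf_csp P -> ~ failed P ->
  (forall r : rule, closed_under r P) ->
  hyper_arc_consistent P.
Proof.
move=> _ Hnf Hcl c Hc.
case: c Hc => [u v|u v|u v w|u v w] Hc.
- case: (dom3 u Hnf) => [Hu|[Hu|Hu]]; case: (dom3 v Hnf) => [Hv|[Hv|Hv]];
    first [ try_rules Hnf Hc Hcl | exact: hac_eq ].
- case: (dom3 u Hnf) => [Hu|[Hu|Hu]]; case: (dom3 v Hnf) => [Hv|[Hv|Hv]];
    first [ try_rules Hnf Hc Hcl | exact: hac_not ].
- case: (dom3 u Hnf) => [Hu|[Hu|Hu]]; case: (dom3 v Hnf) => [Hv|[Hv|Hv]];
    case: (dom3 w Hnf) => [Hw|[Hw|Hw]];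
    first [ try_rules Hnf Hc Hcl | by apply: hac_and => //; rewrite Hw ?in_setT ?in_set1 ].
- case: (dom3 u Hnf) => [Hu|[Hu|Hu]]; case: (dom3 v Hnf) => [Hv|[Hv|Hv]];
    case: (dom3 w Hnf) => [Hw|[Hw|Hw]];
    first [ try_rules Hnf Hc Hcl | by apply: hac_or => //; rewrite Hw ?in_setT ?in_set1 ].
Qed.
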